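(* Let $R$ be an associative unital division ring over a field $F$ of characteristic $0$ and let $\theta_{l,m}\in R$ be invertible for all $(l,m)\in\mathbb{Z}^2$. For $\lambda\in F$ define $$\mathcal{L}_{l,m}=\begin{pmatrix}\theta_{l,m+1}\theta_{l,m}^{-1} & \lambda\\ \lambda & \theta_{l,m+1}^{-1}\theta_{l,m}\end{pmatrix},\qquad \mathcal{M}_{l,m}=\begin{pmatrix}\theta_{l+1,m}\theta_{l,m}^{-1} & \lambda\\ \lambda & \theta_{l+1,m}^{-1}\theta_{l,m}\end{pmatrix}.$$ If the compatibility condition $\mathcal{L}_{l+1,m}\mathcal{M}_{l,m}=\mathcal{M}_{l,m+1}\mathcal{L}_{l,m}$ of the system $\Psi_{l,m+1}=\mathcal{L}_{l,m}\Psi_{l,m}$, $\Psi_{l+1,m}=\mathcal{M}_{l,m}\Psi_{l,m}$ holds for all $(l,m)\in\mathbb{Z}^2$ and all $\lambda\in F$, then for all $(l,m)$ $$\theta_{l+1,m+1}^{-1}\theta_{l+1,m}-\theta_{l+1,m+1}^{-1}\theta_{l,m+1}=\theta_{l,m+1}\theta_{l,m}^{-1}-\theta_{l+1,m}\theta_{l,m}^{-1}.$$ *)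

(* Defs.v *)
From HB Require Import structures.
From mathcomp Require Import all_boot all_order all_algebra.
Set Implicit Arguments. Unset Strict Implicit. Unset Printing Implicit Defensive.
Import Order.TTheory GRing.Theory Num.Theory.
Local Open Scope ring_scope.

Definition mx2 (R : pzRingType) (a b c d : R) : 'M[R]_2 :=
  \matrix_(i < 2, j < 2)
    if (i : nat) == 0%N then (if (j : nat) == 0%N then a else b)
    else (if (j : nat) == 0%N then c else d).

Definition laxL (F : fieldType) (R : unitAlgType F) (theta : int -> int -> R)
  (lam : F) (l m : int) : 'M[R]_2 :=
  mx2 (theta l (m + 1) * (theta l m)^-1) (lam%:A) (lam%:A)
      ((theta l (m + 1))^-1 * theta l m).

Definition laxM (F : fieldType) (R : unitAlgType F) (theta : int -> int -> R)
  (lam : F) (l m : int) : 'M[R]_2 :=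
  mx2 (theta (l + 1) m * (theta l m)^-1) (lam%:A) (lam%:A)
      ((theta (l + 1) m)^-1 * theta l m).

(* Main.v *)
Require Import Defs.
From HB Require Import structures.
From mathcomp Require Import all_boot all_order all_algebra.
Import Order.TTheory GRing.Theory Num.Theory.
Local Open Scope ring_scope.

Theorem proposition5p2 (F : fieldType) (R : unitAlgType F)
  (charF0 : [pchar F] =i pred0)
  (divR : forall x : R, x != 0 -> x \is a GRing.unit)
  (theta : int -> int -> R)
  (theta_unit : forall l m : int, theta l m \is a GRing.unit)
  (compat : forall (l m : int) (lam : F),
     laxL theta lam (l + 1) m *m laxM theta lam l m
     = laxM theta lam l (m + 1) *m laxL theta lam l m) :
  forall l m : int,
    (theta (l + 1) (m + 1))^-1 * theta (l + 1) m
      - (theta (l + 1) (m + 1))^-1 * theta l (m + 1)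
    = theta l (m + 1) * (theta l m)^-1 - theta (l + 1) m * (theta l m)^-1.
Proof.
move=> l m.
have := compat l m 1.
move/(congr1 (fun M : 'M[R]_2 => M 1 0)).
rewrite !mxE !big_ord_recr big_ord0 /= !mxE /= scale1r !mul1r !mulr1 !big_ord0 !add0r.
move=> H.
set a := theta (l+1) m / theta l m in H *.
set b := (theta (l + 1) (m + 1))^-1 * theta (l + 1) m in H *.
set c := theta l (m + 1) / theta l m in H *.
set d := (theta (l + 1) (m + 1))^-1 * theta l (m + 1) in H *.
have -> : b = c + d - a by rewrite -H (addrC a) addrK.
by rewrite addrAC addrK.
Qed.
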